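(* If $\mu>-2$ and $|\nu|<|\mu+1|$, then $x\mapsto I_{\mu+1}(x)/\tilde{t}_{\mu,\nu}(x)$ is strictly increasing on $(0,\infty)$. If $\mu>-2$ and $|\mu+1|<|\nu|<\mu+3$, then $x\mapsto I_{\mu+1}(x)/\tilde{t}_{\mu,\nu}(x)$ is strictly decreasing on $(0,\infty)$.
   Context: For real $\mu,\nu$ the (normalized) modified Lommel function of the first kind is $$\tilde{t}_{\mu,\nu}(x)=\sum_{k=0}^\infty\frac{(\frac{1}{2}x)^{\mu+2k+1}}{\Gamma\big(k+\frac{\mu-\nu+3}{2}\big)\Gamma\big(k+\frac{\mu+\nu+3}{2}\big)},\quad x>0,$$ and $I_\alpha(x)=\sum_{k=0}^\infty\frac{(\frac{1}{2}x)^{2k+\alpha}}{k!\,\Gamma(k+\alpha+1)}$ is the modified Bessel function of the first kind. *)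

(* Defs.v *)
From Stdlib Require Import Reals.
From Coquelicot Require Import Coquelicot.
Open Scope R_scope.

(* Euler Gamma function for s > 0:  Gamma(s) = int_0^oo t^(s-1) e^(-t) dt,
   realised as the limit of the proper Riemann integrals over [1/(n+1), n+1].
   (Only ever evaluated at positive arguments in the statement.) *)
Definition Gamma (s : R) : R :=
  Lim_seq (fun n : nat =>
    RInt (fun t => Rpower t (s - 1) * exp (- t)) (/ (INR n + 1)) (INR n + 1)).

Definition besselI (a x : R) : R :=
  Series (fun k : nat =>
    Rpower (x / 2) (2 * INR k + a) / (INR (Factorial.fact k) * Gamma (INR k + a + 1))).

Definition lommel_t (mu nu x : R) : R :=
  Series (fun k : nat =>
    Rpower (x / 2) (mu + 2 * INR k + 1) /
      (Gamma (INR k + (mu - nu + 3) / 2) * Gamma (INR k + (mu + nu + 3) / 2))).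

(* Main.v *)
Require Import Defs.
From Stdlib Require Import Reals Lra Lia Classical.
From Coquelicot Require Import Coquelicot.
Open Scope R_scope.

Definition F (s t : R) := Rpower t (s - 1) * exp (- t).

Lemma Rpower_pos x y : 0 < Rpower x y.
Proof. unfold Rpower; apply exp_pos. Qed.

Lemma F_pos s t : 0 < F s t.
Proof. unfold F; apply Rmult_lt_0_compat; [apply Rpower_pos|apply exp_pos]. Qed.

Lemma is_derive_Rpow y t : 0 < t -> is_derive (fun x => Rpower x y) t (y * Rpower t (y - 1)).
Proof. intros; apply is_derive_Reals, derivable_pt_lim_power; auto. Qed.

Lemma cont_Rpow y t : 0 < t -> continuous (fun x => Rpower x y) t.
Proof. intros; apply (ex_derive_continuous (K:=R_AbsRing) (V:=R_NormedModule)); eexists; apply is_derive_Rpow; auto. Qed.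

Lemma cont_F s t : 0 < t -> continuous (F s) t.
Proof.
  intros Ht. unfold F.
  apply (continuous_mult (fun x => Rpower x (s-1)) (fun x => exp (-x))).
  - now apply cont_Rpow.
  - apply (ex_derive_continuous (K:=R_AbsRing) (V:=R_NormedModule)). auto_derive. auto.
Qed.

Lemma exRInt_F s a b : 0 < a -> a <= b -> ex_RInt (F s) a b.
Proof.
  intros Ha Hab; apply (ex_RInt_continuous (V:=R_CompleteNormedModule)); intros z Hz.
  apply cont_F. rewrite Rmin_left in Hz; lra.
Qed.

Definition u (s : R) (n : nat) := RInt (F s) (/ (INR n + 1)) (INR n + 1).

Lemma bounds n : 0 < / (INR n + 1) /\ / (INR n + 1) <= 1 /\ 1 <= INR n + 1.
Proof.
  pose proof (pos_INR n).
  split; [apply Rinv_0_lt_compat; lra|]. split; [|lra].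
  rewrite <- Rinv_1; apply Rinv_le_contravar; lra.
Qed.

Lemma u_incr s n : u s n <= u s (S n).
Proof.
  unfold u. rewrite S_INR.
  destruct (bounds n) as (h1&h2&h3). destruct (bounds (S n)) as (h4&h5&h6).
  rewrite S_INR in *.
  assert (/ (INR n + 1 + 1) <= / (INR n + 1)) by (apply Rinv_le_contravar; lra).
  rewrite <- (RInt_Chasles (F s) (/ (INR n + 1 + 1)) (/ (INR n + 1)) (INR n + 1 + 1)) by (apply exRInt_F; lra).
  rewrite <- (RInt_Chasles (F s) (/ (INR n + 1)) (INR n + 1) (INR n + 1 + 1)) by (apply exRInt_F; lra).
  assert (0 <= RInt (F s) (/ (INR n + 1 + 1)) (/ (INR n + 1))).
  { apply RInt_ge_0; [lra| apply exRInt_F; lra| intros; left; apply F_pos]. }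
  assert (0 <= RInt (F s) (INR n + 1) (INR n + 1 + 1)).
  { apply RInt_ge_0; [lra| apply exRInt_F; lra| intros; left; apply F_pos]. }
  unfold plus; simpl. lra.
Qed.

Lemma u_mono s n m : (n <= m)%nat -> u s n <= u s m.
Proof.
  induction 1; [lra|]. eapply Rle_trans; [apply IHle|apply u_incr].
Qed.

Lemma u_pos s : 0 < u s 1.
Proof.
  unfold u. simpl INR. 
  apply RInt_gt_0.
  - lra.
  - intros; apply F_pos.
  - intros x Hx; apply cont_F. assert (0 < / (0+1+1)) by (apply Rinv_0_lt_compat; lra). lra.
Qed.

Lemma u_ex s : ex_lim_seq (u s).
Proof. apply ex_lim_seq_incr, u_incr. Qed.

Lemma Lim_ge s n : Rbar_le (u s n) (Lim_seq (u s)).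
Proof.
  rewrite <- (Lim_seq_const (u s n)).
  apply Lim_seq_le_loc. exists n. intros; now apply u_mono.
Qed.

Definition H (s t : R) := - (Rpower t s * exp (- t)).

Lemma H_der s t : 0 < t -> is_derive (H s) t (F (s+1) t - s * F s t).
Proof.
  intros Ht. unfold H, F.
  replace (s + 1 - 1) with s by ring.
  evar (d : R).
  assert (D : is_derive (fun x => Rpower x s * exp (-x)) t d).
  { apply (is_derive_mult (fun x => Rpower x s) (fun x => exp (-x))).
    - apply is_derive_Rpow; auto.
    - auto_derive; auto.
    - intros; apply Rmult_comm. }
  subst d.
  match goal with |- is_derive _ _ ?v => replace v with (opp (plus (mult (s * Rpower t (s - 1)) (exp (- t)))
       (mult (Rpower t s) (- (1) * exp (- t))))) end.
  2:{ unfold opp, plus, mult; simpl. ring. }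
  apply (is_derive_opp _ _ _ D).
Qed.

Lemma ibp s a b : 0 < a -> a <= b ->
  RInt (F (s+1)) a b = s * RInt (F s) a b + (H s b - H s a).
Proof.
  intros Ha Hab.
  assert (I1 := RInt_correct (F (s+1)) a b (exRInt_F _ _ _ Ha Hab)).
  assert (I2 := RInt_correct (F s) a b (exRInt_F _ _ _ Ha Hab)).
  assert (I3 := is_RInt_minus _ _ _ _ _ _ I1 (is_RInt_scal _ _ _ s _ I2)).
  assert (I4 : is_RInt (fun t => F (s+1) t - s * F s t) a b (minus (H s b) (H s a))).
  { apply (is_RInt_derive (V:=R_CompleteNormedModule)).
    - intros x Hx. rewrite Rmin_left in Hx by lra. apply H_der; lra.
    - intros x Hx. rewrite Rmin_left in Hx by lra.
      apply (continuous_minus (V:=R_NormedModule)). apply cont_F; lra.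
      apply (continuous_scal_r (K:=R_AbsRing) (V:=R_NormedModule) s (F s)).
      apply cont_F; lra. }
  assert (E := is_RInt_unique _ _ _ _ I3).
  assert (E2 := is_RInt_unique _ _ _ _ I4).
  rewrite (RInt_ext _ (fun t => F (s+1) t - s * F s t)) in E. 2: { intros; reflexivity. }
  rewrite E in E2.
  unfold minus, plus, opp, scal in E2; simpl in E2. unfold mult in E2; simpl in E2.
  lra.
Qed.

Lemma seqN : is_lim_seq (fun n => INR n + 1) p_infty.
Proof.
  apply is_lim_seq_ext with (fun n => INR (S n)). intros; apply S_INR.
  apply (is_lim_seq_incr_1 INR). apply is_lim_seq_INR.
Qed.

Lemma lim_seq_N f l : is_lim f p_infty l -> is_lim_seq (fun n => f (INR n + 1)) l.
Proof.
  intros Hf. unfold is_lim_seq. 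
  eapply filterlim_comp. apply seqN. exact Hf.
Qed.

Lemma lim_hi s : is_lim (fun t => Rpower t s * exp (- t)) p_infty 0.
Proof.
  apply is_lim_ext_loc with (fun t => exp (t * (s * (ln t / t) - 1))).
  { exists 0. intros t Ht. unfold Rpower. rewrite <- exp_plus. f_equal. field. lra. }
  assert (L1 : is_lim (fun t => s * (ln t / t)) p_infty (s * 0)).
  { apply (is_lim_scal_l _ s p_infty 0). apply is_lim_div_ln_p. }
  assert (L2 : is_lim (fun t => s * (ln t / t) - 1) p_infty (s * 0 - 1)).
  { apply (is_lim_minus _ _ _ (Finite (s*0)) (Finite 1)); auto.
    apply is_lim_const. unfold is_Rbar_minus, is_Rbar_plus; simpl; reflexivity. }
  assert (Hm : Rbar_mult p_infty (s * 0 - 1) = m_infty).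
  { simpl. case Rle_dec; intros Hd; [exfalso; lra | reflexivity]. }
  assert (L3 : is_lim (fun t => t * (s * (ln t / t) - 1)) p_infty m_infty).
  { rewrite <- Hm. apply is_lim_mult; auto. apply is_lim_id. simpl. lra. }
  eapply is_lim_comp with (l := m_infty).
  - apply is_lim_exp_m.
  - exact L3.
  - simpl. exists 0. intros; discriminate.
Qed.

Lemma lim_lo_aux s : 0 < s -> is_lim (fun t => exp (- (s * ln t))) p_infty 0.
Proof.
  intros Hs.
  assert (L1 : is_lim (fun t => s * ln t) p_infty (Rbar_mult s p_infty)).
  { apply is_lim_scal_l. apply is_lim_ln_p. }
  assert (Hm : Rbar_mult s p_infty = p_infty).
  { simpl. case Rle_dec; intros Hd; [|exfalso; lra]. 
    case Rle_lt_or_eq_dec; intros; [reflexivity|exfalso; lra]. }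
  rewrite Hm in L1.
  assert (L2 : is_lim (fun t => - (s * ln t)) p_infty m_infty).
  { apply (is_lim_opp _ _ p_infty). exact L1. }
  eapply is_lim_comp with (l := m_infty).
  - apply is_lim_exp_m.
  - exact L2.
  - simpl. exists 0. intros; discriminate.
Qed.

Lemma bnd_hi s : is_lim_seq (fun n => H s (INR n + 1)) 0.
Proof.
  unfold H. replace (Finite 0) with (Rbar_opp 0) by (simpl; f_equal; ring).
  apply (is_lim_seq_opp (fun n => Rpower (INR n+1) s * exp(-(INR n+1))) 0).
  apply (lim_seq_N (fun t => Rpower t s * exp (- t))). apply lim_hi.
Qed.

Lemma bnd_lo s : 0 < s -> is_lim_seq (fun n => H s (/ (INR n + 1))) 0.
Proof.
  intros Hs.
  unfold H. replace (Finite 0) with (Rbar_opp 0) by (simpl; f_equal; ring).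
  apply (is_lim_seq_opp (fun n => Rpower (/ (INR n+1)) s * exp(-(/ (INR n+1)))) 0).
  apply is_lim_seq_le_le with (fun _ => 0) (fun n => exp (- (s * ln (INR n + 1)))).
  - intros n. destruct (bounds n) as (h1&h2&h3). split.
    + left; apply Rmult_lt_0_compat; [apply Rpower_pos|apply exp_pos].
    + unfold Rpower. rewrite ln_Rinv by lra.
      replace (exp (- (s * ln (INR n + 1)))) with (exp (s * - ln (INR n + 1)) * 1) by (rewrite Rmult_1_r; f_equal; ring).
      apply Rmult_le_compat_l. left; apply exp_pos.
      rewrite <- exp_0 at 2.
      left; apply exp_increasing. lra.
  - apply is_lim_seq_const.
  - apply lim_seq_N with (f := fun t => exp (- (s * ln t))). apply lim_lo_aux; auto.
Qed.

Definition L s := Lim_seq (u s).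

Lemma L_rec s : 0 < s -> L (s + 1) = Rbar_mult s (L s).
Proof.
  intros Hs. unfold L.
  rewrite (Lim_seq_ext _ (fun n => s * u s n + (H s (INR n + 1) - H s (/ (INR n + 1))))).
  2:{ intros n. destruct (bounds n) as (h1&h2&h3). unfold u. apply ibp; lra. }
  assert (B : is_lim_seq (fun n => H s (INR n + 1) - H s (/ (INR n + 1))) 0).
  { replace (Finite 0) with (Rbar_minus 0 0) by (simpl; f_equal; ring).
    apply is_lim_seq_minus'; [apply bnd_hi|apply bnd_lo; auto]. }
  rewrite Lim_seq_plus.
  - rewrite (is_lim_seq_unique _ _ B), Lim_seq_scal_l, Rbar_plus_0_r. reflexivity.
  - apply ex_lim_seq_scal_l, u_ex.
  - eexists; exact B.
  - rewrite (is_lim_seq_unique _ _ B), Lim_seq_scal_l.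
    destruct (Rbar_mult s (Lim_seq (u s))); simpl; auto.
Qed.

Lemma exp_le x y : x <= y -> exp x <= exp y.
Proof. intros [h|h]; [left; apply exp_increasing; auto| subst; lra]. Qed.

Lemma Rpow_le s t : 1 <= s <= 2 -> 0 < t -> Rpower t (s - 1) <= 1 + t.
Proof.
  intros Hs Ht. destruct (Rle_lt_dec t 1).
  - unfold Rpower. assert (ln t <= 0).
    { rewrite <- ln_1. destruct r; [left; apply ln_increasing; lra| subst; lra]. }
    apply Rle_trans with (exp 0). apply exp_le. nra. rewrite exp_0; lra.
  - apply Rle_trans with (Rpower t 1). apply Rle_Rpower; lra. rewrite Rpower_1; lra.
Qed.

Lemma u_bound s n : 1 <= s <= 2 -> u s n <= 3.
Proof.
  intros Hs. unfold u. destruct (bounds n) as (h1&h2&h3).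
  set (e := / (INR n + 1)) in *. set (N := INR n + 1) in *.
  pose (K := fun t : R => - ((2 + t) * exp (- t))).
  assert (I : is_RInt (fun t => (1 + t) * exp (- t)) e N (minus (K N) (K e))).
  { apply (is_RInt_derive (V:=R_CompleteNormedModule) K).
    - intros x _. unfold K. auto_derive; auto. ring.
    - intros x _. apply (ex_derive_continuous (K:=R_AbsRing) (V:=R_NormedModule)). auto_derive. auto. }
  apply Rle_trans with (RInt (fun t => (1 + t) * exp (- t)) e N).
  - apply RInt_le. lra. apply exRInt_F; lra. eexists; exact I.
    intros x Hx. unfold F. apply Rmult_le_compat_r. left; apply exp_pos. apply Rpow_le; lra.
  - rewrite (is_RInt_unique _ _ _ _ I). unfold minus, plus, opp, K; simpl.
    assert (0 < exp (- N)) by apply exp_pos.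
    assert (exp (- e) <= 1) by (rewrite <- exp_0; apply exp_le; lra).
    assert (0 < exp (- e)) by apply exp_pos.
    nra.
Qed.

Lemma L_pos s : Rbar_lt 0 (L s).
Proof.
  apply Rbar_lt_le_trans with (u s 1). simpl. apply u_pos. apply Lim_ge.
Qed.

Lemma L_fin12 s : 1 <= s <= 2 -> Rbar_le (L s) 3.
Proof.
  intros Hs. unfold L. rewrite <- (Lim_seq_const 3). apply Lim_seq_le_loc.
  exists 0%nat. intros; apply u_bound; auto.
Qed.

Definition finpos s := exists g, L s = Finite g /\ 0 < g.

Lemma finpos_of s : (L s <> p_infty) -> finpos s.
Proof.
  intros Hn. pose proof (L_pos s). destruct (L s) eqn:E; simpl in *; try tauto.
  exists r; auto.
Qed.

Lemma finpos02 s : 0 < s <= 2 -> finpos s.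
Proof.
  intros Hs. apply finpos_of. destruct (Rle_lt_dec 1 s).
  - pose proof (L_fin12 s) as B. destruct (L s); simpl in *; try discriminate; tauto.
  - pose proof (L_fin12 (s+1)) as B. rewrite L_rec in B by lra.
    intros E; rewrite E in B. specialize (B ltac:(lra)). simpl in B.
    revert B. case Rle_dec; intros Hd B; [|lra]. revert B. case Rle_lt_or_eq_dec; intros; simpl in *; [tauto|lra].
Qed.

Lemma finpos_all s : 0 < s -> finpos s.
Proof.
  intros Hs. destruct (nfloor1_ex s Hs) as [n Hn].
  revert s Hs Hn. induction n; intros s Hs Hn.
  - apply finpos02. simpl in Hn. lra.
  - destruct (Rle_lt_dec s 2). apply finpos02; lra.
    destruct (IHn (s - 1)) as (g&E&Hg). rewrite S_INR in Hn; lra. rewrite S_INR in Hn; lra.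
    exists ((s-1) * g). split; [|apply Rmult_lt_0_compat; lra].
    assert (E2 := L_rec (s-1) ltac:(lra)). replace (s-1+1) with s in E2 by ring. rewrite E2, E. reflexivity.
Qed.

Lemma Series_nonneg d : (forall k, 0 <= d k) -> ex_series d -> 0 <= Series d.
Proof.
  intros Hd Ex.
  assert (E : Series (fun k => 0 * d k) = 0) by (rewrite Series_scal_l; ring).
  rewrite <- E. apply Series_le; auto. intros; split; [lra| rewrite Rmult_0_l; auto].
Qed.

Lemma Series_pos_term d j : (forall k, 0 <= d k) -> ex_series d -> d j <= Series d.
Proof.
  intros Hd Ex. rewrite (Series_incr_n d (S j)) by (auto; lia). simpl pred.
  assert (0 <= Series (fun k => d (S j + k)%nat)).
  { apply Series_nonneg; auto. apply (ex_series_incr_n d (S j)); auto. }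
  assert (d j <= sum_f_R0 d j).
  { destruct j. simpl; lra. rewrite tech5. pose proof (cond_pos_sum d j Hd). lra. }
  lra.
Qed.

Lemma Series_lt p q j : (forall k, p k <= q k) -> p j < q j -> ex_series p -> ex_series q ->
  Series p < Series q.
Proof.
  intros Hle Hlt Ep Eq.
  assert (Ed : ex_series (fun k => q k - p k)).
  { apply (ex_series_minus q p); auto. }
  pose proof (Series_pos_term (fun k => q k - p k) j) as T.
  rewrite Series_minus in T by auto.
  assert (q j - p j <= Series q - Series p) by (apply T; auto; intros k; specialize (Hle k); lra).
  lra.
Qed.

Lemma least_pos (P : nat -> Prop) : (forall n, P n \/ ~ P n) -> (exists n, P n) ->
  exists m, P m /\ forall k, (k < m)%nat -> ~ P k.
Proof.
  intros Dec [n Hn]. revert Hn. induction n as [n IH] using (well_founded_induction Wf_nat.lt_wf).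
  intros Hn. destruct (classic (exists k, (k < n)%nat /\ P k)) as [[k [Hk Pk]]|No].
  - apply (IH k Hk Pk).
  - exists n; split; auto. intros k Hk Pk. apply No; eauto.
Qed.

Section PS.
Variables (a b : nat -> R).
Hypothesis apos : forall k, 0 < a k.
Hypothesis bpos : forall k, 0 < b k.
Hypothesis cinc : forall k, a k / b k < a (S k) / b (S k).
Hypothesis aex : forall x, 0 < x -> ex_series (fun k => a k * x ^ k).
Hypothesis bex : forall x, 0 < x -> ex_series (fun k => b k * x ^ k).

Lemma S_pos (c : nat -> R) x : (forall k, 0 < c k) -> 0 < x -> ex_series (fun k => c k * x ^ k) ->
  0 < Series (fun k => c k * x ^ k).
Proof.
  intros Hc Hx Ex. eapply Rlt_le_trans. 2: apply (Series_pos_term _ 0); auto.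
  simpl. rewrite Rmult_1_r; auto.
  intros k; left; apply Rmult_lt_0_compat; auto; apply pow_lt; auto.
Qed.

Lemma ps_mono z w : 0 < z -> z < w ->
  Series (fun k => a k * z ^ k) / Series (fun k => b k * z ^ k) <
  Series (fun k => a k * w ^ k) / Series (fun k => b k * w ^ k).
Proof.
  intros Hz Hzw. assert (Hw : 0 < w) by lra.
  set (Saz := Series (fun k => a k * z ^ k)).
  set (Sbz := Series (fun k => b k * z ^ k)).
  set (Saw := Series (fun k => a k * w ^ k)).
  set (Sbw := Series (fun k => b k * w ^ k)).
  assert (Pbz : 0 < Sbz) by (apply S_pos; auto).
  assert (Pbw : 0 < Sbw) by (apply S_pos; auto).
  set (r := Saz / Sbz).
  set (d := fun k => a k - r * b k).
  assert (Ed : forall x, 0 < x -> ex_series (fun k => d k * x ^ k)).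
  { intros x Hx. apply ex_series_ext with (fun k => plus (a k * x ^ k) (opp (scal r (b k * x ^ k)))).
    intros k; unfold d, plus, opp, scal; simpl; unfold mult; simpl; ring.
    apply (ex_series_minus (V:=R_NormedModule) (fun k => a k * x ^ k) (fun k => scal r (b k * x ^ k))); auto. apply (ex_series_scal_l (V:=R_NormedModule)); auto. }
  assert (Sd : forall x, 0 < x -> Series (fun k => d k * x ^ k) =
                 Series (fun k => a k * x ^ k) - r * Series (fun k => b k * x ^ k)).
  { intros x Hx. rewrite <- Series_scal_l. rewrite <- Series_minus; auto.
    apply Series_ext; intros; unfold d; ring.
    apply (ex_series_scal_l (V:=R_NormedModule) r); auto. }
  assert (Sdz : Series (fun k => d k * z ^ k) = 0).
  { rewrite Sd by auto. fold Saz Sbz. unfold r. field. lra. }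
  assert (dsign : forall k, 0 < d k <-> r < a k / b k).
  { intros k. unfold d. specialize (bpos k). split; intros.
    - apply Rmult_lt_reg_r with (b k); auto. field_simplify; lra.
    - replace (a k) with (a k / b k * b k) by (field; lra). nra. }
  assert (prop : forall k, 0 < d k -> 0 < d (S k)).
  { intros k Hk. apply dsign. apply dsign in Hk. specialize (cinc k). lra. }
  assert (ex : exists m, 0 < d m).
  { apply NNPP; intros No.
    assert (All : forall k, d k <= 0) by (intros k; apply Rnot_lt_le; intros Hk; apply No; eauto).
    assert (d0 : d 0%nat < 0).
    { destruct (Rle_lt_dec r (a 0%nat / b 0%nat)).
      - exfalso. assert (0 < d 1%nat) by (apply dsign; specialize (cinc 0%nat); lra).
        specialize (All 1%nat); lra.
      - destruct (Rle_lt_dec 0 (d 0%nat)) as [[h|h]|h]; auto.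
        apply dsign in h; lra. unfold d in h. specialize (bpos 0%nat).
        exfalso. assert (Ea : a 0%nat = r * b 0%nat) by lra.
        assert (a 0%nat / b 0%nat = r) by (rewrite Ea; field; lra). lra. }
    assert (HS : Series (fun k => d k * z ^ k) < Series (fun k => 0 * (b k * z ^ k))).
    { apply Series_lt with 0%nat; auto.
      - intros k. rewrite Rmult_0_l. specialize (All k). pose proof (pow_lt z k Hz). nra.
      - simpl. lra.
      - apply (ex_series_scal_l (V:=R_NormedModule) 0); auto. }
    rewrite Series_scal_l, Sdz in HS. lra. }
  destruct (least_pos (fun m => 0 < d m)) as (m & Hm & Hlt).
  { intros n; destruct (Rlt_dec 0 (d n)); auto. }
  { exact ex. }
  assert (up : forall k, (m <= k)%nat -> 0 < d k).
  { intros k Hk; induction Hk; auto. }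
  assert (lo : forall k, (k < m)%nat -> d k <= 0).
  { intros k Hk; apply Rnot_lt_le; apply Hlt; auto. }
  set (t := w / z).
  assert (Ht : 1 < t). { unfold t. apply Rmult_lt_reg_r with z; auto. field_simplify; lra. }
  assert (Hwk : forall k, w ^ k = z ^ k * t ^ k).
  { intros k. rewrite <- Rpow_mult_distr. f_equal. unfold t; field; lra. }
  assert (LT : Series (fun k => t ^ m * (d k * z ^ k)) < Series (fun k => d k * w ^ k)).
  { apply Series_lt with (S m).
    - intros k. rewrite Hwk. pose proof (pow_lt z k Hz).
      destruct (Nat.lt_ge_cases k m) as [h|h].
      + specialize (lo k h). pose proof (Rle_pow t k m ltac:(lra) ltac:(lia)).
        assert (d k * z ^ k <= 0) by nra. nra.
      + specialize (up k h). pose proof (Rle_pow t m k ltac:(lra) h).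
        assert (0 < d k * z ^ k) by nra. nra.
    - rewrite Hwk. pose proof (pow_lt z (S m) Hz). specialize (up (S m) ltac:(lia)).
      pose proof (Rlt_pow t m (S m) Ht ltac:(lia)).
      assert (0 < d (S m) * z ^ (S m)) by nra. nra.
    - apply (ex_series_scal_l (V:=R_NormedModule)); auto.
    - auto. }
  rewrite Series_scal_l, Sdz, Sd in LT by auto. fold Saw Sbw in LT.
  apply Rmult_lt_reg_r with Sbw; auto. replace (Saw / Sbw * Sbw) with Saw by (field; lra).
  fold r. lra.
Qed.
End PS.

Lemma lim_inv_quad p q : 0 < p -> 0 < q ->
  is_lim_seq (fun n => / ((INR n + p) * (INR n + q))) 0.
Proof.
  intros Hp Hq.
  assert (A : forall c, is_lim_seq (fun n => INR n + c) p_infty).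
  { intros c. apply (is_lim_seq_plus _ _ p_infty c p_infty). apply is_lim_seq_INR.
    apply is_lim_seq_const. reflexivity. }
  assert (B : is_lim_seq (fun n => (INR n + p) * (INR n + q)) p_infty).
  { apply (is_lim_seq_mult _ _ p_infty p_infty p_infty); auto. reflexivity. }
  replace (Finite 0) with (Rbar_inv p_infty) by reflexivity.
  apply is_lim_seq_inv; auto. discriminate.
Qed.

Lemma ex_ps (c : nat -> R) p q : 0 < p -> 0 < q -> (forall k, 0 < c k) ->
  (forall k, c (S k) = c k / ((INR k + p) * (INR k + q))) ->
  forall x, 0 < x -> ex_series (fun k => c k * x ^ k).
Proof.
  intros Hp Hq Hc Hrec x Hx.
  apply ex_series_Rabs. apply ex_series_DAlembert with 0.
  - lra.
  - intros n. specialize (Hc n). pose proof (pow_lt x n Hx). nra.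
  - apply is_lim_seq_ext with (fun n => x * / ((INR n + p) * (INR n + q))).
    + intros n. rewrite Hrec. simpl pow. pose proof (pos_INR n). specialize (Hc n).
      pose proof (pow_lt x n Hx).
      assert (0 < (INR n + p) * (INR n + q)) by nra.
      rewrite Rabs_pos_eq. field. repeat split; lra.
      apply Rlt_le. apply Rdiv_lt_0_compat. 
      apply Rmult_lt_0_compat; [apply Rdiv_lt_0_compat; auto|nra].
      nra.
    + replace (Finite 0) with (Rbar_mult x 0) by (simpl; f_equal; ring).
      apply is_lim_seq_scal_l. apply lim_inv_quad; auto.
Qed.

Lemma Gamma_L s : Gamma s = real (L s).
Proof. reflexivity. Qed.

Lemma Gamma_pos s : 0 < s -> 0 < Gamma s.
Proof. intros Hs. destruct (finpos_all s Hs) as (g&E&Hg). rewrite Gamma_L, E. auto. Qed.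

Lemma Gamma_rec s : 0 < s -> Gamma (s + 1) = s * Gamma s.
Proof.
  intros Hs. destruct (finpos_all s Hs) as (g&E&Hg). rewrite !Gamma_L, L_rec, E by auto. reflexivity.
Qed.

Lemma Gamma_S k p : 0 < p -> Gamma (INR (S k) + p) = (INR k + p) * Gamma (INR k + p).
Proof.
  intros Hp. rewrite S_INR. replace (INR k + 1 + p) with ((INR k + p) + 1) by ring.
  apply Gamma_rec. pose proof (pos_INR k). lra.
Qed.

Lemma Gamma_posk k p : 0 < p -> 0 < Gamma (INR k + p).
Proof. intros; apply Gamma_pos. pose proof (pos_INR k). lra. Qed.

Lemma Rpower_split x k m : 0 < x ->
  Rpower x (2 * INR k + m) = Rpower x m * (x ^ 2) ^ k.
Proof.
  intros Hx. rewrite Rpower_plus, Rmult_comm. f_equal.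
  replace (2 * INR k) with (INR (2 * k)) by (rewrite mult_INR; reflexivity).
  rewrite Rpower_pow by auto. apply pow_mult.
Qed.

Lemma ratio_inc (a b : nat -> R) (P Q : nat -> R) :
  (forall k, 0 < a k) -> (forall k, 0 < b k) -> (forall k, 0 < P k) ->
  (forall k, a (S k) = a k / P k) -> (forall k, b (S k) = b k / Q k) -> (forall k, P k < Q k) ->
  forall k, a k / b k < a (S k) / b (S k).
Proof.
  intros Ha Hb HP Hra Hrb HPQ k. rewrite Hra, Hrb.
  specialize (Ha k); specialize (Hb k); specialize (HP k); specialize (HPQ k).
  replace (a k / P k / (b k / Q k)) with ((a k / b k) * (Q k / P k)) by (field; repeat split; lra).
  assert (1 < Q k / P k) by (apply Rmult_lt_reg_r with (P k); auto; field_simplify; lra).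
  assert (0 < a k / b k) by (apply Rdiv_lt_0_compat; auto). nra.
Qed.

Section Main.
Variables mu nu : R.
Hypothesis Hmu : mu > -2.
Let al := (mu - nu + 3) / 2.
Let be := (mu + nu + 3) / 2.
Hypothesis Hal : 0 < al.
Hypothesis Hbe : 0 < be.

Definition Aa k := / (INR (Factorial.fact k) * Gamma (INR k + (mu + 1) + 1)).
Definition Bb k := / (Gamma (INR k + (mu - nu + 3) / 2) * Gamma (INR k + (mu + nu + 3) / 2)).

Lemma fact_pos k : 0 < INR (Factorial.fact k).
Proof. apply INR_fact_lt_0. Qed.

Lemma Aa_pos k : 0 < Aa k.
Proof.
  unfold Aa. apply Rinv_0_lt_compat, Rmult_lt_0_compat. apply fact_pos.
  replace (INR k + (mu + 1) + 1) with (INR k + (mu + 2)) by ring. apply Gamma_posk. lra.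
Qed.

Lemma Bb_pos k : 0 < Bb k.
Proof.
  unfold Bb. apply Rinv_0_lt_compat, Rmult_lt_0_compat; apply Gamma_posk; auto.
Qed.

Lemma Aa_rec k : Aa (S k) = Aa k / ((INR k + 1) * (INR k + (mu + 2))).
Proof.
  unfold Aa. replace (INR (S k) + (mu + 1) + 1) with (INR (S k) + (mu + 2)) by ring.
  replace (INR k + (mu + 1) + 1) with (INR k + (mu + 2)) by ring.
  rewrite Gamma_S by lra. rewrite fact_simpl, mult_INR, S_INR.
  pose proof (fact_pos k). pose proof (pos_INR k). pose proof (Gamma_posk k (mu+2) ltac:(lra)).
  field. repeat split; lra.
Qed.

Lemma Bb_rec k : Bb (S k) = Bb k / ((INR k + al) * (INR k + be)).
Proof.
  unfold Bb. fold al be. rewrite !Gamma_S by auto.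
  pose proof (pos_INR k). pose proof (Gamma_posk k al Hal). pose proof (Gamma_posk k be Hbe).
  field. repeat split; lra.
Qed.

Lemma bessel_eq x : 0 < x ->
  besselI (mu + 1) x = Rpower (x / 2) (mu + 1) * Series (fun k => Aa k * ((x / 2) ^ 2) ^ k).
Proof.
  intros Hx. unfold besselI. rewrite <- Series_scal_l. apply Series_ext; intros k.
  rewrite Rpower_split by lra. unfold Aa. field.
  split. apply Rgt_not_eq. replace (INR k + (mu + 1) + 1) with (INR k + (mu + 2)) by ring. apply Gamma_posk; lra.
  apply Rgt_not_eq, fact_pos.
Qed.

Lemma lommel_eq x : 0 < x ->
  lommel_t mu nu x = Rpower (x / 2) (mu + 1) * Series (fun k => Bb k * ((x / 2) ^ 2) ^ k).
Proof.
  intros Hx. unfold lommel_t. rewrite <- Series_scal_l. apply Series_ext; intros k.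
  replace (mu + 2 * INR k + 1) with (2 * INR k + (mu + 1)) by ring.
  rewrite Rpower_split by lra. unfold Bb. fold al be.
  pose proof (Gamma_posk k al Hal). pose proof (Gamma_posk k be Hbe).
  field. split; lra.
Qed.

Lemma ratio_eq x : 0 < x ->
  besselI (mu + 1) x / lommel_t mu nu x =
  Series (fun k => Aa k * ((x / 2) ^ 2) ^ k) / Series (fun k => Bb k * ((x / 2) ^ 2) ^ k).
Proof.
  intros Hx. rewrite bessel_eq, lommel_eq by auto.
  assert (0 < Rpower (x/2) (mu+1)) by apply Rpower_pos.
  assert (0 < Series (fun k => Bb k * ((x / 2) ^ 2) ^ k)).
  { apply S_pos. apply Bb_pos. apply pow_lt; lra.
    apply (ex_ps Bb al be); auto. apply Bb_pos. apply Bb_rec. apply pow_lt; lra. }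
  field. lra.
Qed.

Lemma z_mono x y : 0 < x -> x < y -> 0 < (x/2)^2 /\ (x/2)^2 < (y/2)^2.
Proof. intros; split; simpl; nra. Qed.

Lemma exA : forall x, 0 < x -> ex_series (fun k => Aa k * x ^ k).
Proof. apply (ex_ps Aa 1 (mu+2)); try lra. apply Aa_pos. apply Aa_rec. Qed.
Lemma exB : forall x, 0 < x -> ex_series (fun k => Bb k * x ^ k).
Proof. apply (ex_ps Bb al be); auto. apply Bb_pos. apply Bb_rec. Qed.

Lemma QP k : (INR k + al) * (INR k + be) - (INR k + 1) * (INR k + (mu + 2)) = ((mu+1)^2 - nu^2) / 4.
Proof. unfold al, be. field. Qed.

Lemma inc_case : (mu+1)^2 > nu^2 -> forall x y, 0 < x -> x < y ->
  besselI (mu + 1) x / lommel_t mu nu x < besselI (mu + 1) y / lommel_t mu nu y.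
Proof.
  intros Hc x y Hx Hxy. rewrite !ratio_eq by lra. destruct (z_mono x y Hx Hxy).
  apply (ps_mono Aa Bb Bb_pos); auto.
  apply (ratio_inc Aa Bb (fun k => (INR k + 1) * (INR k + (mu + 2))) (fun k => (INR k + al) * (INR k + be))).
  apply Aa_pos. apply Bb_pos. intros k; pose proof (pos_INR k); nra. apply Aa_rec. apply Bb_rec.
  intros k. pose proof (QP k). lra.
  apply exA. apply exB.
Qed.

Lemma dec_case : (mu+1)^2 < nu^2 -> forall x y, 0 < x -> x < y ->
  besselI (mu + 1) y / lommel_t mu nu y < besselI (mu + 1) x / lommel_t mu nu x.
Proof.
  intros Hc x y Hx Hxy. rewrite !ratio_eq by lra. destruct (z_mono x y Hx Hxy).
  set (zx := (x/2)^2) in *. set (zy := (y/2)^2) in *.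
  assert (M : Series (fun k => Bb k * zx ^ k) / Series (fun k => Aa k * zx ^ k) <
              Series (fun k => Bb k * zy ^ k) / Series (fun k => Aa k * zy ^ k)).
  { apply (ps_mono Bb Aa Aa_pos); auto.
    apply (ratio_inc Bb Aa (fun k => (INR k + al) * (INR k + be)) (fun k => (INR k + 1) * (INR k + (mu + 2)))).
    apply Bb_pos. apply Aa_pos. intros k; pose proof (pos_INR k); nra. apply Bb_rec. apply Aa_rec.
    intros k. pose proof (QP k). lra.
    apply exB. apply exA. }
  pose proof (S_pos Aa zx Aa_pos ltac:(lra) (exA zx ltac:(lra))).
  pose proof (S_pos Aa zy Aa_pos ltac:(lra) (exA zy ltac:(lra))).
  pose proof (S_pos Bb zx Bb_pos ltac:(lra) (exB zx ltac:(lra))).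
  pose proof (S_pos Bb zy Bb_pos ltac:(lra) (exB zy ltac:(lra))).
  set (ax := Series (fun k => Aa k * zx ^ k)) in *.
  set (ay := Series (fun k => Aa k * zy ^ k)) in *.
  set (bx := Series (fun k => Bb k * zx ^ k)) in *.
  set (by_ := Series (fun k => Bb k * zy ^ k)) in *.
  assert (C : bx * ay < by_ * ax).
  { apply (Rmult_lt_compat_r (ax * ay)) in M. 2: nra.
    replace (bx / ax * (ax * ay)) with (bx * ay) in M by (field; lra).
    replace (by_ / ay * (ax * ay)) with (by_ * ax) in M by (field; lra). exact M. }
  apply Rmult_lt_reg_r with (bx * by_). nra.
  replace (ay / by_ * (bx * by_)) with (bx * ay) by (field; lra).
  replace (ax / bx * (bx * by_)) with (by_ * ax) by (field; lra). exact C.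
Qed.
End Main.

Theorem theorem3p2 (mu nu : R) :
  (mu > -2 -> Rabs nu < Rabs (mu + 1) ->
     forall x y, 0 < x -> x < y ->
       besselI (mu + 1) x / lommel_t mu nu x < besselI (mu + 1) y / lommel_t mu nu y)
  /\
  (mu > -2 -> Rabs (mu + 1) < Rabs nu -> Rabs nu < mu + 3 ->
     forall x y, 0 < x -> x < y ->
       besselI (mu + 1) y / lommel_t mu nu y < besselI (mu + 1) x / lommel_t mu nu x).
Proof.
  split.
  - intros Hmu Hab. 
    assert (0 < (mu - nu + 3) / 2 /\ 0 < (mu + nu + 3) / 2 /\ (mu+1)^2 > nu^2) as (h1&h2&h3).
    { revert Hab. unfold Rabs. destruct (Rcase_abs nu); destruct (Rcase_abs (mu+1)); intros; simpl; repeat split; nra. }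
    apply inc_case; auto.
  - intros Hmu Hab Hab2.
    assert (0 < (mu - nu + 3) / 2 /\ 0 < (mu + nu + 3) / 2 /\ (mu+1)^2 < nu^2) as (h1&h2&h3).
    { revert Hab Hab2. unfold Rabs. destruct (Rcase_abs nu); destruct (Rcase_abs (mu+1)); intros; simpl; repeat split; nra. }
    apply dec_case; auto.
Qed.
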